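(* Let $\gamma>0$ and, for $n\in\mathbb{N}$, let $D_n=\operatorname{diag}(1,2,\dots,n)\in\mathbb{R}^{n\times n}$ and \[ \mathcal{W}_n=\begin{pmatrix} 0 & D_n & 0\\ -D_n & 0 & \gamma D_n\\ 0 & -\gamma D_n & -D_n^2\end{pmatrix}\in\mathbb{R}^{3n\times 3n}, \] regarded as an operator on $\mathbb{C}^{3n}$ with the Euclidean inner product. Then for every $n\in\mathbb{N}$ one has $i\mathbb{R}\subset\rho(\mathcal{W}_n)$ (the resolvent set), and $\sup_{n\in\mathbb{N}}\|\mathcal{W}_n^{-1}\|<\infty$.
   Context: $\mathcal{W}_n$ is the matrix obtained in the paper from a modal approximation of the weakly coupled thermoelastic system under Dirichlet (displacement)–Neumann (temperature) boundary conditions, using the basis $\sqrt{2/\pi}\,\frac1j\sin jx$, $\sqrt{2/\pi}\sin jx$, $\sqrt{2/\pi}\cos jx$, $j=1,\dots,n$. *)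

(* Defs.v *)
From HB Require Import structures.
From mathcomp Require Import all_boot all_order all_algebra.
From mathcomp Require Import reals.
From mathcomp Require Export complex.
Set Implicit Arguments. Unset Strict Implicit. Unset Printing Implicit Defensive.
Import Order.TTheory GRing.Theory Num.Theory.
Local Open Scope ring_scope.

Definition Dmx (R : realType) (n : nat) : 'M[R[i]]_n :=
  diag_mx (\row_(j < n) (j.+1)%:R).

(* W_n = [[0, D, 0], [-D, 0, gamma D], [0, -gamma D, -D^2]] as a
   (n + n + n) x (n + n + n) complex matrix (blocks in this order). *)
Definition Wmx (R : realType) (gamma : R) (n : nat) : 'M[R[i]]_(n + n + n) :=
  let D := Dmx R n in
  let g : R[i] := (gamma%:C)%C in
  block_mx (block_mx 0 D (- D) 0)
           (col_mx 0 (g *: D))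
           (row_mx 0 (- (g *: D)))
           (- (D *m D)).

Definition enorm (R : realType) (m : nat) (v : 'cV[R[i]]_m) : R :=
  Num.sqrt (\sum_(k < m) (complex.Re (v k 0) ^+ 2 + complex.Im (v k 0) ^+ 2)).

Definition resolvent (R : realType) (m : nat) (A : 'M[R[i]]_m) : pred R[i] :=
  fun z => (A - z%:M) \in unitmx.

Definition imag_unit_times (R : realType) (s : R) : R[i] := Complex 0 s.

(* Main.v *)
Require Import Defs.
From HB Require Import structures.
From mathcomp Require Import all_boot all_order all_algebra.
From mathcomp Require Import reals.
From mathcomp Require Import complex.
From mathcomp Require Import ring lra.
Import Order.TTheory GRing.Theory Num.Theory.
Local Open Scope ring_scope.

Section Helpers.
Variable R : realType.
Lemma kerR (d g s a1 a2 b1 b2 c1 c2 : R) : 0 < d -> 0 < g ->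
  d * b1 = - (s * a2) -> d * b2 = s * a1 ->
  - (d * a1) + g * (d * c1) = - (s * b2) -> - (d * a2) + g * (d * c2) = s * b1 ->
  - (g * (d * b1)) - d * (d * c1) = - (s * c2) -> - (g * (d * b2)) - d * (d * c2) = s * c1 ->
  a1 = 0 /\ a2 = 0 /\ b1 = 0 /\ b2 = 0 /\ c1 = 0 /\ c2 = 0.
Proof.
move=> d0 g0 e1 e2 e3 e4 e5 e6.
have E : d^+2 * (c1^+2 + c2^+2) = 0.
  have -> : d^+2 * (c1^+2 + c2^+2) =
     - (a1 * (d * b1 + s * a2) + a2 * (d * b2 - s * a1)
        + b1 * (- (d * a1) + g * (d * c1) + s * b2) + b2 * (- (d * a2) + g * (d * c2) - s * b1)
        + c1 * (- (g * (d * b1)) - d * (d * c1) + s * c2) + c2 * (- (g * (d * b2)) - d * (d * c2) - s * c1)) by ring.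
  have r1 : d * b1 + s * a2 = 0 by lra.
  have r2 : d * b2 - s * a1 = 0 by lra.
  have r3 : - (d * a1) + g * (d * c1) + s * b2 = 0 by lra.
  have r4 : - (d * a2) + g * (d * c2) - s * b1 = 0 by lra.
  have r5 : - (g * (d * b1)) - d * (d * c1) + s * c2 = 0 by lra.
  have r6 : - (g * (d * b2)) - d * (d * c2) - s * c1 = 0 by lra.
  rewrite r1 r2 r3 r4 r5 r6; ring.
have dd : d^+2 != 0 by rewrite expf_neq0 // gt_eqF.
move: E => /eqP; rewrite mulf_eq0 (negbTE dd) /= => /eqP E.
have c10 : c1 = 0 by nra.
have c20 : c2 = 0 by nra.
subst c1 c2.
have b10 : b1 = 0.
  have : g * (d * b1) = 0 by move: e5; rewrite !mulr0; lra.
  by move/eqP; rewrite !mulf_eq0 (gt_eqF g0) (gt_eqF d0) /= => /eqP.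
have b20 : b2 = 0.
  have : g * (d * b2) = 0 by move: e6; rewrite !mulr0; lra.
  by move/eqP; rewrite !mulf_eq0 (gt_eqF g0) (gt_eqF d0) /= => /eqP.
subst b1 b2.
have a10 : a1 = 0.
  have : d * a1 = 0 by move: e3; rewrite !mulr0; lra.
  by move/eqP; rewrite !mulf_eq0 (gt_eqF d0) /= => /eqP.
have a20 : a2 = 0.
  have : d * a2 = 0 by move: e4; rewrite !mulr0; lra.
  by move/eqP; rewrite !mulf_eq0 (gt_eqF d0) /= => /eqP.
by do !split.
Qed.

Lemma bndR (d g a b c : R) : 1 <= d -> 0 < g ->
  a^+2 + b^+2 + c^+2 <= 9 * (1 + g + g^+2)^+2 *
   ((d * b)^+2 + (- (d * a) + g * (d * c))^+2 + (- (g * (d * b)) - d * (d * c))^+2).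
Proof.
move=> d1 g0.
set f1 := d * b; set f2 := - (d * a) + g * (d * c); set f3 := - (g * (d * b)) - d * (d * c).
set M := 1 + g + g^+2.
set S := `|f1| + `|f2| + `|f3|.
have d0 : 0 < d by lra.
have dd1 : 1 <= d * d by nra.
have hb : `|b| <= `|f1|.
  rewrite /f1 normrM (ger0_norm (ltW d0)); have := normr_ge0 b; nra.
have hc0 : d * (d * c) = - (f3 + g * f1) by rewrite /f3 /f1; ring.
have hc : `|c| <= `|f3| + g * `|f1|.
  have : `|d * (d * c)| <= `|f3| + g * `|f1|.
    by rewrite hc0 normrN; apply: le_trans (ler_normD _ _) _; rewrite normrM (gtr0_norm g0).
  rewrite !normrM (ger0_norm (ltW d0)).
  have := normr_ge0 c; nra.
have ha0 : d * a = g * (d * c) - f2 by rewrite /f2; ring.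
have ha : `|a| <= g * `|f3| + g^+2 * `|f1| + `|f2|.
  have h1 : `|d * a| <= g * `|d * c| + `|f2|.
    by rewrite ha0; apply: le_trans (ler_normB _ _) _; rewrite normrM (gtr0_norm g0).
  have h2 : `|d * c| <= `|d * (d * c)|.
    rewrite [X in _ <= X]normrM (ger0_norm (ltW d0)); have := normr_ge0 (d * c); nra.
  have h3 : `|a| <= `|d * a| by rewrite normrM (ger0_norm (ltW d0)); have := normr_ge0 a; nra.
  have h4 : `|d * (d * c)| <= `|f3| + g * `|f1|.
    by rewrite hc0 normrN; apply: le_trans (ler_normD _ _) _; rewrite normrM (gtr0_norm g0).
  nra.
have n1 := normr_ge0 f1; have n2 := normr_ge0 f2; have n3 := normr_ge0 f3.
have M0 : 1 <= M by rewrite /M; nra.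
have ha' : `|a| <= M * S by rewrite /M /S; nra.
have hb' : `|b| <= M * S by rewrite /M /S; nra.
have hc' : `|c| <= M * S by rewrite /M /S; nra.
have sq : forall x : R, x^+2 = `|x|^+2 by move=> x; rewrite real_normK ?num_real.
have S2 : S^+2 <= 3 * (f1^+2 + f2^+2 + f3^+2).
  rewrite (sq f1) (sq f2) (sq f3) /S.
  have := sqr_ge0 (`|f1| - `|f2|); have := sqr_ge0 (`|f2| - `|f3|); have := sqr_ge0 (`|f1| - `|f3|); nra.
have S0 : 0 <= S by rewrite /S; lra.
have MS0 : 0 <= M * S by apply: mulr_ge0; lra.
have pa : `|a|^+2 <= (M * S)^+2 by rewrite ler_sqr ?nnegrE.
have pb : `|b|^+2 <= (M * S)^+2 by rewrite ler_sqr ?nnegrE.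
have pc : `|c|^+2 <= (M * S)^+2 by rewrite ler_sqr ?nnegrE.
rewrite (sq a) (sq b) (sq c).
have : (M * S)^+2 <= M^+2 * (3 * (f1^+2 + f2^+2 + f3^+2)) by rewrite exprMn ler_wpM2l ?sqr_ge0.
nra.
Qed.
Lemma kerC (d g s : R) (a b c : R[i]) : 0 < d -> 0 < g ->
  (d%:C)%C * b = Complex 0 s * a ->
  - ((d%:C)%C * a) + (g%:C)%C * ((d%:C)%C * c) = Complex 0 s * b ->
  - ((g%:C)%C * ((d%:C)%C * b)) - (d%:C)%C * ((d%:C)%C * c) = Complex 0 s * c ->
  a = 0 /\ b = 0 /\ c = 0.
Proof.
case: a => a1 a2; case: b => b1 b2; case: c => c1 c2 d0 g0.
rewrite /real_complex_def; simpc.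
move=> [e1 e2] [e3 e4] [e5 e6].
have [-> [-> [-> [-> [-> ->]]]]] := @kerR d g s a1 a2 b1 b2 c1 c2 d0 g0 e1 e2 e3 e4 e5 e6.
by [].
Qed.

Definition sqc (z : R[i]) := complex.Re z ^+ 2 + complex.Im z ^+ 2.
Arguments sqc : simpl never.

Lemma bndC (d g : R) (a b c : R[i]) : 1 <= d -> 0 < g ->
  sqc a + sqc b + sqc c <= 9 * (1 + g + g^+2)^+2 *
  (sqc ((d%:C)%C * b) + sqc (- ((d%:C)%C * a) + (g%:C)%C * ((d%:C)%C * c))
   + sqc (- ((g%:C)%C * ((d%:C)%C * b)) - (d%:C)%C * ((d%:C)%C * c))).
Proof.
case: a => a1 a2; case: b => b1 b2; case: c => c1 c2 d1 g0.
rewrite /sqc /real_complex_def; simpc => /=.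
have H1 := @bndR d g a1 b1 c1 d1 g0.
have H2 := @bndR d g a2 b2 c2 d1 g0.
lra.
Qed.
Lemma Wmul (gamma : R) n (a b c : 'cV[R[i]]_n) :
  Wmx gamma n *m col_mx (col_mx a b) c =
  col_mx (col_mx (Dmx R n *m b) (- (Dmx R n *m a) + (gamma%:C)%C *: (Dmx R n *m c)))
         (- ((gamma%:C)%C *: (Dmx R n *m b)) - Dmx R n *m (Dmx R n *m c)).
Proof.
rewrite /Wmx mul_block_col mul_block_col mul_col_mx mul_row_col !mul0mx !add0r !addr0.
rewrite add_col_mx ?add0r ?addr0 -!scalemxAl !mulNmx ?mulmxA.

by rewrite !scalemxAl.

Qed.

Lemma Dentry n (b : 'cV[R[i]]_n) j : (Dmx R n *m b) j 0 = ((j.+1)%:R : R)%:C%C * b j 0.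
Proof. by rewrite /Dmx mul_diag_mx !mxE rmorph_nat. Qed.


Lemma natC j : (((j%:R : R)%:C)%C : R[i]) = j%:R.
Proof. exact: rmorph_nat. Qed.

Lemma sumsplitF n (F : R[i] -> R) (a b c : 'cV[R[i]]_n) :
  \sum_(k < n + n + n) F (col_mx (col_mx a b) c k 0) =
  \sum_(j < n) (F (a j 0) + F (b j 0) + F (c j 0)).
Proof.
rewrite big_split_ord big_split_ord /= !big_split /=.
congr (_ + _ + _); apply: eq_bigr => j _; by rewrite !(col_mxEu, col_mxEd).
Qed.

Lemma sumsplit n (a b c : 'cV[R[i]]_n) :
  \sum_(k < n + n + n) sqc (col_mx (col_mx a b) c k 0) =
  \sum_(j < n) (sqc (a j 0) + sqc (b j 0) + sqc (c j 0)).
Proof. exact: sumsplitF. Qed.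

Lemma xdecomp {m} (x : 'cV[R[i]]_(m + m + m)) :
  x = col_mx (col_mx (usubmx (usubmx x)) (dsubmx (usubmx x))) (dsubmx x).
Proof. by rewrite !vsubmxK. Qed.

Lemma part1 (gamma : R) (hgamma : 0 < gamma) n s :
  resolvent (Wmx gamma n) (imag_unit_times s).
Proof.
rewrite /resolvent /imag_unit_times unitmxE unitfE -det_tr.
apply/negP => /det0P [v vnz vA].
set A := Wmx gamma n - (Complex 0 s)%:M.
have Ax : A *m v^T = 0 by rewrite -[A]trmxK -trmx_mul vA trmx0.
move: Ax; rewrite (xdecomp v^T).
set a := usubmx (usubmx v^T); set b := dsubmx (usubmx v^T); set c := dsubmx v^T.
rewrite /A mulmxBl Wmul mul_scalar_mx !scale_col_mx => /eqP; rewrite subr_eq0 => /eqP.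
move/eq_col_mx => [/eq_col_mx [E1 E2] E3].
have Z : forall j, a j 0 = 0 /\ b j 0 = 0 /\ c j 0 = 0.
  move=> j.
  have e1 := congr1 (fun M : 'M[R[i]]_(n, 1) => M j 0) E1.
  have e2 := congr1 (fun M : 'M[R[i]]_(n, 1) => M j 0) E2.
  have e3 := congr1 (fun M : 'M[R[i]]_(n, 1) => M j 0) E3.
  move: e1 e2 e3; rewrite /Dmx !mul_diag_mx !mxE -!natC.
  exact: kerC (ltr0Sn _ _) hgamma.
have a0 : a = 0 by apply/matrixP => j k; rewrite (ord1 k) [RHS]mxE; case: (Z j).
have b0 : b = 0 by apply/matrixP => j k; rewrite (ord1 k) [RHS]mxE; case: (Z j) => _ [].
have c0 : c = 0 by apply/matrixP => j k; rewrite (ord1 k) [RHS]mxE; case: (Z j) => _ [].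
have : v^T = 0 by rewrite (xdecomp v^T) -/a -/b -/c a0 b0 c0 !col_mx0.
by move/(congr1 trmx); rewrite trmxK trmx0 => v0; rewrite v0 eqxx in vnz.
Qed.

Lemma part2 (gamma : R) (hgamma : 0 < gamma) n (x : 'cV[R[i]]_(n + n + n)) :
  enorm x <= 3 * (1 + gamma + gamma^+2) * enorm (Wmx gamma n *m x).
Proof.
rewrite (xdecomp x).
set a := usubmx (usubmx x); set b := dsubmx (usubmx x); set c := dsubmx x.
rewrite Wmul /enorm.
have -> : forall m (y : 'cV[R[i]]_m), \sum_(k < m) (complex.Re (y k 0) ^+ 2 + complex.Im (y k 0) ^+ 2)
   = \sum_(k < m) sqc (y k 0) by [].
rewrite !sumsplit.
set M := 1 + gamma + gamma^+2.
have M0 : 0 <= 3 * M by rewrite /M; nra.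
have e : 3 * M = Num.sqrt ((3 * M) ^+ 2) by rewrite sqrtr_sqr ger0_norm.
rewrite {1}e -sqrtrM ?sqr_ge0 //.
rewrite ler_sqrt; last first.
  apply: mulr_ge0; first exact: sqr_ge0.
  by apply: sumr_ge0 => j _; rewrite /sqc; apply: addr_ge0; [apply: addr_ge0|]; apply: addr_ge0; apply: sqr_ge0.
rewrite mulr_sumr; apply: ler_sum => j _.
rewrite /Dmx !mul_diag_mx !mxE -!natC.
have -> : (3 * M) ^+ 2 = 9 * M ^+ 2 by ring.
apply: bndC => //; by rewrite ler1n.
Qed.

End Helpers.

Theorem lemma4p7 (R : realType) (gamma : R) (hgamma : 0 < gamma) :
  (forall (n : nat) (s : R), resolvent (Wmx gamma n) (imag_unit_times s)) /\
  (exists C : R, forall (n : nat) (v : 'cV[R[i]]_(n + n + n)),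
      enorm (invmx (Wmx gamma n) *m v) <= C * enorm v).
Proof.
split; first exact: part1.
exists (3 * (1 + gamma + gamma^+2)) => n v.
have Wu : Wmx gamma n \in unitmx.
  have := @part1 R gamma hgamma n 0; rewrite /resolvent /imag_unit_times.
  have -> : (Complex 0 0 : R[i])%:M = 0 :> 'M_(n + n + n).
    by apply/matrixP => i j; rewrite !mxE mul0rn.
  by rewrite subr0.
have vE : v = Wmx gamma n *m (invmx (Wmx gamma n) *m v) by rewrite mulmxA mulmxV // mul1mx.
rewrite {2}vE; exact: part2.
Qed.
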